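(* Let $A$ be an abelian category having all products and all coproducts indexed by (small) sets, and let $\Lambda$ be a generator of $A$. Let $C$ be a closed subcategory of $A$ and set $I = I_\Lambda(C)$. Then $\Lambda/I$ is an object of $C$ and $\Lambda/I$ is a generator for $C$. Consequently, if $C$ and $C'$ are distinct closed subcategories of $A$, then $I_\Lambda(C)\neq I_\Lambda(C')$.
   Context: A full subcategory $C$ of $A$ is called closed if it is closed under (set-indexed) products, coproducts, subquotients (quotients of subobjects), and isomorphisms. For a closed subcategory $C$, the kernels of all morphisms from $\Lambda$ to objects of $C$ form a set of subobjects of $\Lambda$, and $I_\Lambda(C)$ is defined as the intersection of all these kernels. *)

(* Defs.v *)
From HB Require Import structures.
From mathcomp Require Import all_boot all_algebra.
Set Implicit Arguments. Unset Strict Implicit. Unset Printing Implicit Defensive.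
Import GRing.Theory.
Local Open Scope ring_scope.

(* the universe of "(small) sets" used as index types of products/coproducts *)
Definition SmallType : Type := Type.

Record preadditive_category := PreAdditive {
  Obj : Type;
  Hom : Obj -> Obj -> zmodType;
  comp : forall X Y Z : Obj, Hom Y Z -> Hom X Y -> Hom X Z;
  idm : forall X : Obj, Hom X X;
  compA : forall X Y Z W (h : Hom Z W) (g : Hom Y Z) (f : Hom X Y),
      comp h (comp g f) = comp (comp h g) f;
  comp1m : forall X Y (f : Hom X Y), comp (idm Y) f = f;
  compm1 : forall X Y (f : Hom X Y), comp f (idm X) = f;
  compDl : forall X Y Z (g g' : Hom Y Z) (f : Hom X Y),
      comp (g + g') f = comp g f + comp g' f;
  compDr : forall X Y Z (g : Hom Y Z) (f f' : Hom X Y),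
      comp g (f + f') = comp g f + comp g f'
}.

Arguments comp {p X Y Z}.
Arguments idm {p}.

Section Defs.
Variable A : preadditive_category.
Local Notation Ob := (Obj A).
Implicit Types X Y Z W S K Q L T P : Ob.

Definition mono X Y (m : Hom X Y) : Prop :=
  forall W (g h : Hom W X), comp m g = comp m h -> g = h.

Definition epi X Y (e : Hom X Y) : Prop :=
  forall W (g h : Hom Y W), comp g e = comp h e -> g = h.

Definition is_iso X Y (f : Hom X Y) : Prop :=
  exists g : Hom Y X, comp g f = idm X /\ comp f g = idm Y.

Definition is_kernel X Y K (f : Hom X Y) (k : Hom K X) : Prop :=
  comp f k = 0 /\
  forall W (g : Hom W X), comp f g = 0 ->
    exists h : Hom W K, comp k h = g /\ forall h', comp k h' = g -> h' = h.

Definition is_cokernel X Y Q (f : Hom X Y) (q : Hom Y Q) : Prop :=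
  comp q f = 0 /\
  forall W (g : Hom Y W), comp g f = 0 ->
    exists h : Hom Q W, comp h q = g /\ forall h', comp h' q = g -> h' = h.

Definition is_zero_object (Z : Ob) : Prop :=
  (forall X (f g : Hom Z X), f = g) /\ (forall X (f g : Hom X Z), f = g).

Definition is_product (I : SmallType) (F : I -> Ob) (P : Ob)
    (p : forall i, Hom P (F i)) : Prop :=
  forall W (g : forall i, Hom W (F i)),
    exists h : Hom W P, (forall i, comp (p i) h = g i) /\
      forall h', (forall i, comp (p i) h' = g i) -> h' = h.

Definition is_coproduct (I : SmallType) (F : I -> Ob) (P : Ob)
    (c : forall i, Hom (F i) P) : Prop :=
  forall W (g : forall i, Hom (F i) W),
    exists h : Hom P W, (forall i, comp h (c i) = g i) /\
      forall h', (forall i, comp h' (c i) = g i) -> h' = h.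

Definition is_abelian : Prop :=
  (exists Z : Ob, is_zero_object Z) /\
  (forall X Y : Ob, exists P (p : forall b : bool, Hom P (if b then X else Y)),
      is_product p) /\
  (forall X Y (f : Hom X Y), exists K (k : Hom K X), is_kernel f k) /\
  (forall X Y (f : Hom X Y), exists Q (q : Hom Y Q), is_cokernel f q) /\
  (forall X Y (m : Hom X Y), mono m -> exists Z (f : Hom Y Z), is_kernel f m) /\
  (forall X Y (e : Hom X Y), epi e -> exists Z (f : Hom Z X), is_cokernel f e).

Definition has_set_products : Prop :=
  forall (I : SmallType) (F : I -> Ob), exists P (p : forall i, Hom P (F i)),
    is_product p.

Definition has_set_coproducts : Prop :=
  forall (I : SmallType) (F : I -> Ob), exists P (c : forall i, Hom (F i) P),
    is_coproduct c.

Definition is_generator (G : Ob) : Prop :=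
  forall X Y (f g : Hom X Y), f <> g ->
    exists h : Hom G X, comp f h <> comp g h.

Definition is_generator_for (Cl : Ob -> Prop) (G : Ob) : Prop :=
  forall X Y, Cl X -> Cl Y -> forall (f g : Hom X Y), f <> g ->
    exists h : Hom G X, comp f h <> comp g h.

Definition closed_subcategory (Cl : Ob -> Prop) : Prop :=
  (forall X Y (f : Hom X Y), is_iso f -> Cl X -> Cl Y) /\
  (forall (I : SmallType) (F : I -> Ob) P (p : forall i, Hom P (F i)),
      is_product p -> (forall i, Cl (F i)) -> Cl P) /\
  (forall (I : SmallType) (F : I -> Ob) P (c : forall i, Hom (F i) P),
      is_coproduct c -> (forall i, Cl (F i)) -> Cl P) /\
  (forall X S Y (m : Hom S X) (e : Hom S Y), Cl X -> mono m -> epi e -> Cl Y).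

Definition le_sub (L S T : Ob) (s : Hom S L) (t : Hom T L) : Prop :=
  exists h : Hom S T, comp t h = s.

Definition kernel_into (Cl : Ob -> Prop) (L K : Ob) (k : Hom K L) : Prop :=
  exists X (f : Hom L X), Cl X /\ is_kernel f k.

(* i : I -> L is (a representative of) I_L(Cl), the intersection of the
   subobjects of L which are kernels of morphisms L -> X, X in Cl *)
Definition is_I (Cl : Ob -> Prop) (L I : Ob) (i : Hom I L) : Prop :=
  mono i /\
  (forall K (k : Hom K L), kernel_into Cl k -> le_sub i k) /\
  (forall S (s : Hom S L), mono s ->
     (forall K (k : Hom K L), kernel_into Cl k -> le_sub s k) -> le_sub s i).

End Defs.

(* Main.v *)
Require Import Defs.
From mathcomp Require Import ssreflect ssrfun ssrbool eqtype ssralg.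
From Stdlib Require Import Classical ClassicalEpsilon.
Import GRing.Theory.
Local Open Scope ring_scope.
Set Implicit Arguments. Unset Strict Implicit.


Section Basics.
Variable A : preadditive_category.
Local Notation cp g f := (@Defs.comp A _ _ _ g f).
Implicit Types X Y Z W K Q S : Obj A.

Lemma comp0m X Y Z (f : Hom X Y) : cp (0 : Hom Y Z) f = 0.
Proof.
have H := compDl (0 : Hom Y Z) 0 f; rewrite addr0 in H.
by apply: (addrI (cp (0 : Hom Y Z) f)); rewrite addr0 -H.
Qed.

Lemma compm0 X Y Z (g : Hom Y Z) : cp g (0 : Hom X Y) = 0.
Proof.
have H := compDr g (0 : Hom X Y) 0; rewrite addr0 in H.
by apply: (addrI (cp g (0 : Hom X Y))); rewrite addr0 -H.
Qed.

Lemma compNl X Y Z (g : Hom Y Z) (f : Hom X Y) : cp (- g) f = - cp g f.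
Proof.
have H : cp g f + cp (- g) f = 0 by rewrite -compDl subrr comp0m.
by apply: (addrI (cp g f)); rewrite H subrr.
Qed.

Lemma compBl X Y Z (g h : Hom Y Z) (f : Hom X Y) : cp (g - h) f = cp g f - cp h f.
Proof. by rewrite compDl compNl. Qed.

Lemma epi_of X Y (e : Hom X Y) :
  (forall W (u : Hom Y W), cp u e = 0 -> u = 0) -> epi e.
Proof.
move=> H W g h Hgh; apply/eqP; rewrite -subr_eq0; apply/eqP; apply: H.
by rewrite compBl Hgh subrr.
Qed.

Lemma kernel_mono X Y K (f : Hom X Y) (k : Hom K X) : is_kernel f k -> mono k.
Proof.
move=> [H0 Hu] W g h Hgh.
have E : cp f (cp k g) = 0 by rewrite Defs.compA H0 comp0m.
have [h0 [_ U]] := Hu W (cp k g) E.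
by rewrite (U g erefl) (U h (esym Hgh)).
Qed.

Lemma cokernel_epi X Y Q (f : Hom X Y) (q : Hom Y Q) : is_cokernel f q -> epi q.
Proof.
move=> [H0 Hu] W g h Hgh.
have E : cp (cp g q) f = 0 by rewrite -Defs.compA H0 compm0.
have [h0 [_ U]] := Hu W (cp g q) E.
by rewrite (U g erefl) (U h (esym Hgh)).
Qed.

Lemma mono_id X : @mono A X X (idm X).
Proof. by move=> W g h; rewrite !comp1m. Qed.

Lemma epi_id X : @epi A X X (idm X).
Proof. by move=> W g h; rewrite !compm1. Qed.

Lemma mono_comp X Y Z (a : Hom Y Z) (b : Hom X Y) : mono a -> mono b -> mono (cp a b).
Proof. by move=> Ha Hb W g h; rewrite -!Defs.compA => /Ha /Hb. Qed.

End Basics.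

Local Notation cp g f := (Defs.comp g f).

Lemma big_map (A : preadditive_category) (L : Obj A) (Cl : Obj A -> Prop) :
  has_set_products A -> is_generator L -> closed_subcategory Cl ->
  exists (P : Obj A) (f : Hom L P), Cl P /\
   forall (K : Obj A) (k : Hom K L), kernel_into Cl k ->
     forall (W : Obj A) (g : Hom W L), cp f g = 0 -> le_sub g k.
Proof.
move=> Hprod Hgen [_ [HP _]].
pose J := {S : Hom L L -> Prop | exists (X : Obj A) (f : Hom L X), Cl X /\ forall h, S h <-> cp f h = 0}.
have ch : forall j : J, {X : Obj A & {f : Hom L X | Cl X /\ forall h, sval j h <-> cp f h = 0}}.
  move=> j; have [X HX] := constructive_indefinite_description _ (proj2_sig j).
  have [f Hf] := constructive_indefinite_description _ HX.
  exact: (existT _ X (exist _ f Hf)).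
pose F j := projT1 (ch j).
pose fj j : Hom L (F j) := sval (projT2 (ch j)).
have Hfj j : Cl (F j) /\ forall h, sval j h <-> cp (fj j) h = 0 := svalP (projT2 (ch j)).
have [P [p Hp]] := Hprod J F.
have [f [Hf _]] := Hp L fj.
exists P, f; split.
  by apply: (HP J F P p Hp) => j; case: (Hfj j).
move=> K k [X [f' [ClX [Hk0 Hk]]]] W g Hfg.
suff E : cp f' g = 0 by have [h [Hh _]] := Hk W g E; exists h.
apply: NNPP => Hne.
have [h Hh] := Hgen _ _ (cp f' g) 0 Hne.
apply: Hh; rewrite comp0m -Defs.compA.
pose S := fun h : Hom L L => cp f' h = 0.
have HS : exists (X : Obj A) (f : Hom L X), Cl X /\ forall h, S h <-> cp f h = 0.
  by exists X, f'.
pose j0 : J := exist _ S HS.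
have : sval j0 (cp g h).
  apply/(proj2 (Hfj j0)).
  by rewrite -(Hf j0) -!Defs.compA (Defs.compA f g h) Hfg comp0m compm0.
by [].
Qed.

Lemma I_exists (A : preadditive_category) (L : Obj A) (Cl : Obj A -> Prop) :
  is_abelian A -> has_set_products A -> is_generator L -> closed_subcategory Cl ->
  exists (I : Obj A) (i : Hom I L), is_I Cl i.
Proof.
move=> [_ [_ [Hker _]]] Hprod Hgen HCl.
have [P [f [ClP Hf]]] := big_map Hprod Hgen HCl.
have [K [k Hk]] := Hker _ _ f.
exists K, k; split; first exact: kernel_mono Hk.
split.
  move=> K' k' Hk'; exact: Hf _ _ Hk' _ k (proj1 Hk).
move=> S s _ Hs; apply: Hs; by exists P, f.
Qed.

Lemma quotient_prop (A : preadditive_category) (L : Obj A) (Cl : Obj A -> Prop) :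
  is_abelian A -> has_set_products A -> is_generator L -> closed_subcategory Cl ->
  forall (I : Obj A) (i : Hom I L), is_I Cl i ->
  forall (Q : Obj A) (q : Hom L Q), is_cokernel i q -> Cl Q /\ is_generator_for Cl Q.
Proof.
move=> Hab Hprod Hgen HCl I i [Imono [Ile Imax]] Q q [Hq0 Hq].
have [_ [_ [Hker [Hcok [Hmk Hec]]]]] := Hab.
have [P [f [ClP Hf]]] := big_map Hprod Hgen HCl.
have [K [k Hk]] := Hker _ _ f.
have kI : le_sub k i.
  apply: Imax; first exact: kernel_mono Hk.
  move=> K' k' Hk'; exact: Hf _ _ Hk' _ k (proj1 Hk).
have Hfq : forall (W : Obj A) (g : Hom W L), cp f g = 0 -> cp q g = 0.
  move=> W g Hg; have [w [Hw _]] := (proj2 Hk) W g Hg.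
  case: kI => t Ht. by rewrite -Hw -Ht !Defs.compA Hq0 !comp0m.
split.
  have [C [c [Hc0 Hc]]] := Hcok _ _ f.
  have [M [m Hm]] := Hker _ _ c.
  have [e [He _]] := (proj2 Hm) L f Hc0.
  have mmono := kernel_mono Hm.
  have eepi : epi e.
    apply: epi_of => W u Hu.
    have [K1 [k1 Hk1]] := Hker _ _ u.
    have [e' [He' _]] := (proj2 Hk1) L e Hu.
    have mk := mono_comp mmono (kernel_mono Hk1).
    have [Z [h Hh]] := Hmk _ _ _ mk.
    have Hhf : cp h f = 0.
      by rewrite -He -He' (Defs.compA m k1 e') Defs.compA (proj1 Hh) comp0m.
    have [h' [Hh' _]] := Hc _ h Hhf.
    have Hhm : cp h m = 0 by rewrite -Hh' -Defs.compA (proj1 Hm) compm0.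
    have [v [Hv _]] := (proj2 Hh) _ m Hhm.
    have kv : cp k1 v = idm M.
      apply: mmono; by rewrite Defs.compA Hv compm1.
    by rewrite -(compm1 u) -kv Defs.compA (proj1 Hk1) comp0m.
  have [Z0 [f0 [Hf00 Hf0]]] := Hec _ _ e eepi.
  have Hqf0 : cp q f0 = 0 by apply: Hfq; rewrite -He -Defs.compA Hf00 compm0.
  have [r [Hr _]] := Hf0 _ q Hqf0.
  have repi : epi r.
    move=> W a b Hab'; apply: (@cokernel_epi A _ _ _ i q (conj Hq0 Hq)).
    by rewrite -Hr !Defs.compA Hab'.
  have [_ [_ [_ Hsq]]] := HCl.
  exact: (Hsq P M Q m r ClP mmono repi).
move=> X Y ClX ClY a b Hab'.
have [h Hh] := Hgen _ _ a b Hab'.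
have [Kh [kh Hkh]] := Hker _ _ h.
have Hki : kernel_into Cl kh by exists X, h.
have [t Ht] := Ile _ kh Hki.
have Hhi : cp h i = 0 by rewrite -Ht Defs.compA (proj1 Hkh) comp0m.
have [h' [Hh' _]] := Hq _ h Hhi.
exists h' => E; apply: Hh; by rewrite -Hh' !Defs.compA E.
Qed.

Lemma incl (A : preadditive_category) (L : Obj A) (Cl Cl' : Obj A -> Prop) :
  is_abelian A -> has_set_products A -> has_set_coproducts A -> is_generator L ->
  closed_subcategory Cl -> closed_subcategory Cl' ->
  forall (I I' : Obj A) (i : Hom I L) (i' : Hom I' L),
  is_I Cl i -> is_I Cl' i' -> le_sub i i' -> le_sub i' i -> forall X, Cl X -> Cl' X.
Proof.
move=> Hab Hprod Hcop Hgen HCl HCl' I I' i i' Hi Hi' [t Ht] [t' Ht'] X ClX.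
have [_ [_ [Hker [Hcok _]]]] := Hab.
have [Q [q Hqc]] := Hcok _ _ i.
have [ClQ GQ] := quotient_prop Hab Hprod Hgen HCl Hi Hqc.
have Hqc' : is_cokernel i' q.
  case: Hqc => Hq0 Hq; split; first by rewrite -Ht' Defs.compA Hq0 comp0m.
  move=> W g Hg; apply: Hq; by rewrite -Ht Defs.compA Hg comp0m.
have [ClQ' _] := quotient_prop Hab Hprod Hgen HCl' Hi' Hqc'.
have [C [c Hc]] := Hcop (Hom Q X) (fun _ => Q).
have [phi [Hphi _]] := Hc X (fun h => h).
have [C' [cc [Hcc0 Hcc]]] := Hcok _ _ phi.
have [_ [_ [HcopCl' Hsq']]] := HCl'.
have [_ [_ [_ Hsq]]] := HCl.
have ClC' : Cl C'.
  apply: (Hsq X X C' (idm X) cc ClX); first exact: mono_id.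
  exact: (@cokernel_epi A _ _ _ phi cc (conj Hcc0 Hcc)).
have cc0 : cc = 0.
  apply: NNPP => Hne.
  have [h Hh] := GQ X C' ClX ClC' cc 0 Hne.
  apply: Hh; by rewrite comp0m -(Hphi h) Defs.compA Hcc0 comp0m.
have phiepi : epi phi.
  apply: epi_of => W u Hu.
  have [w [Hw _]] := Hcc W u Hu. by rewrite -Hw cc0 compm0.
have ClC : Cl' C := HcopCl' _ _ C c Hc (fun _ => ClQ').
apply: (Hsq' C C X (idm C) phi ClC) => //; exact: mono_id.
Qed.

Theorem proposition2p5 (A : preadditive_category) :
  is_abelian A -> has_set_products A -> has_set_coproducts A ->
  forall L : Obj A, is_generator L ->
  (forall Cl : Obj A -> Prop, closed_subcategory Cl ->
     (exists (I : Obj A) (i : Hom I L), is_I Cl i) /\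
     (forall (I : Obj A) (i : Hom I L), is_I Cl i ->
        forall (Q : Obj A) (q : Hom L Q), is_cokernel i q ->
          Cl Q /\ is_generator_for Cl Q)) /\
  (forall Cl Cl' : Obj A -> Prop,
     closed_subcategory Cl -> closed_subcategory Cl' ->
     ~ (forall X, Cl X <-> Cl' X) ->
     forall (I I' : Obj A) (i : Hom I L) (i' : Hom I' L),
       is_I Cl i -> is_I Cl' i' -> ~ (le_sub i i' /\ le_sub i' i)).
Proof.
move=> Hab Hprod Hcop L Hgen; split.
  move=> Cl HCl; split; first exact: I_exists.
  exact: quotient_prop.
move=> Cl Cl' HCl HCl' Hne I I' i i' Hi Hi' [H1 H2].
apply: Hne => X; split.
  exact: (incl Hab Hprod Hcop Hgen HCl HCl' Hi Hi' H1 H2).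
exact: (incl Hab Hprod Hcop Hgen HCl' HCl Hi' Hi H2 H1).
Qed.
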